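(* Assume the Nested Logit model with outside option described in the context satisfies Assumptions 1 and 2, and let $S \in \mathcal{S}$. Then for every $i \in S$: (I) if $N(i) \subseteq S$, then $\mathsf{BF}(i,S) = \mathsf{BF}(0,S)$; (II) if $N(i) \not\subseteq S$, then $\mathsf{BF}(i,S) > \mathsf{BF}(0,S)$, and moreover for every $j \in S \setminus \{i\}$ we have $N(i) = N(j)$ if and only if $\mathsf{BF}(i,S) = \mathsf{BF}(j,S)$. Consequently: (a) if $i \in S$ and $\mathsf{BF}(i,S) = \mathsf{BF}(0,S)$, then $N(i) \neq N(k)$ for all $k \notin S$; (b) if $i,j \in S$ and $\mathsf{BF}(i,S) = \mathsf{BF}(j,S) > \mathsf{BF}(0,S)$, then $N(i) = N(j)$; (c) if $i,j \in S$ and $\mathsf{BF}(i,S) \neq \mathsf{BF}(j,S)$, then $N(i) \neq N(j)$.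
   Context: Items: $[n]=\{1,\dots,n\}$ with $n\ge 2$. Experiment design: fix an integer base $b \ge 2$, let $L = \lceil \log_b n \rceil$, and fix an injective map $\sigma: [n] \to \{0,\dots,b-1\}^L$, writing $\sigma_\ell(i)$ for its $\ell$-th coordinate. For $\ell \in \{1,\dots,L\}$ and $d \in \{0,\dots,b-1\}$ let $S_{\ell,-d} = \{i \in [n] : \sigma_\ell(i) \neq d\}$, and let $\mathcal{S} = \{S_{\ell,-d}\}_{\ell,d}$ (the experimental assortments); the control assortment $[n]$ is also offered. Nested Logit model with outside option: $\mathcal{N}$ is a partition of $[n]$ into nonempty disjoint nests; $N(i)$ denotes the nest containing $i$. Each item has a weight $v_i > 0$, each nest $N$ a parameter $\lambda_N \in [0,1]$, and each nest with $\lambda_N = 0$ an additional weight $v_N > 0$. For $S \subseteq [n]$ set $v_N(S) = (\sum_{i \in N \cap S} v_i)^{\lambda_N}$ if $\lambda_N \in (0,1]$ and $v_N(S) = v_N \mathbf{1}(N \cap S \neq \emptyset)$ if $\lambda_N = 0$. For $i \in S$, $\phi(i,S) = \frac{v_{N(i)}(S)}{1 + \sum_{N \in \mathcal{N}} v_N(S)} \cdot \frac{v_i}{\sum_{j \in N(i) \cap S} v_j}$, and the outside option $0$ has $\phi(0,S) = \frac{1}{1 + \sum_{N \in \mathcal{N}} v_N(S)}$. Boost factor: for $S \in \mathcal{S}$ and $i \in S \cup \{0\}$, $\mathsf{BF}(i,S) = \phi(i,S)/\phi(i,[n])$. Multiplier: $\mathsf{Mult}(N,S) = \left(\frac{\sum_{j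 \in N} v_j}{\sum_{j \in N \cap S} v_j}\right)^{1-\lambda_N}$. Assumption 1: $\lambda_N = 1$ if and only if $|N| = 1$. Assumption 2: for every $S \in \mathcal{S}$ and every two distinct nests $N \neq N'$ with $\emptyset \neq N \cap S \neq N$ and $\emptyset \neq N' \cap S \neq N'$, we have $\mathsf{Mult}(N,S) \neq \mathsf{Mult}(N',S)$. *)

(* Defs.v *)
From HB Require Import structures.
From mathcomp Require Import all_boot all_order all_algebra.
From mathcomp Require Import reals exp.
Set Implicit Arguments. Unset Strict Implicit. Unset Printing Implicit Defensive.
Import Order.TTheory GRing.Theory Num.Theory.
Local Open Scope ring_scope.

(* Items [n] are represented by 'I_n (0-based); the outside option is
   handled separately (phi0, BF0). *)

Definition Lb (b n : nat) : nat := up_log b n.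

Definition Sexp (n b : nat) (sigma : 'I_n -> {ffun 'I_(Lb b n) -> 'I_b})
  (l : 'I_(Lb b n)) (d : 'I_b) : {set 'I_n} :=
  [set i | sigma i l != d].

Definition in_Sfam (n b : nat) (sigma : 'I_n -> {ffun 'I_(Lb b n) -> 'I_b})
  (S : {set 'I_n}) : Prop :=
  exists (l : 'I_(Lb b n)) (d : 'I_b), S = Sexp sigma l d.

Section NL.
Variables (R : realType) (n : nat).
(* P : the partition into nests, v : item weights, lam : nest parameters,
   vN : extra nest weights (used when lam N = 0). *)
Variables (P : {set {set 'I_n}}) (v : 'I_n -> R) (lam : {set 'I_n} -> R)
          (vN : {set 'I_n} -> R).

Definition vNS (N S : {set 'I_n}) : R :=
  if lam N == 0 then vN N * (N :&: S != set0)%:R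
  else (\sum_(j in N :&: S) v j) `^ (lam N).

Definition denom (S : {set 'I_n}) : R := 1 + \sum_(N in P) vNS N S.

(* choice probability of item i in S; N(i) = pblock P i *)
Definition phi (i : 'I_n) (S : {set 'I_n}) : R :=
  vNS (pblock P i) S / denom S * (v i / \sum_(j in pblock P i :&: S) v j).

Definition phi0 (S : {set 'I_n}) : R := 1 / denom S.

Definition BF (i : 'I_n) (S : {set 'I_n}) : R := phi i S / phi i [set: 'I_n].
Definition BF0 (S : {set 'I_n}) : R := phi0 S / phi0 [set: 'I_n].

Definition Mult (N S : {set 'I_n}) : R :=
  ((\sum_(j in N) v j) / (\sum_(j in N :&: S) v j)) `^ (1 - lam N).

Definition NL_model : Prop :=
  partition P [set: 'I_n] /\
  (forall i, 0 < v i) /\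
  (forall N, N \in P -> 0 <= lam N <= 1) /\
  (forall N, N \in P -> lam N = 0 -> 0 < vN N).

Definition Assumption1 : Prop :=
  forall N, N \in P -> (lam N = 1 <-> #|N| = 1%N).

Definition Assumption2 (b : nat) (sigma : 'I_n -> {ffun 'I_(Lb b n) -> 'I_b}) : Prop :=
  forall S, in_Sfam sigma S ->
  forall N N', N \in P -> N' \in P -> N != N' ->
    N :&: S != set0 -> N :&: S != N ->
    N' :&: S != set0 -> N' :&: S != N' ->
    Mult N S != Mult N' S.
End NL.

(* Main.v *)
Require Import Defs.
From HB Require Import structures.
From mathcomp Require Import all_boot all_order all_algebra.
From mathcomp Require Import reals exp.
Import Order.TTheory GRing.Theory Num.Theory.
Local Open Scope ring_scope.
From mathcomp Require Import ring lra.

Section H.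
Set Implicit Arguments. Unset Strict Implicit. Unset Printing Implicit Defensive.
Variables (R : realType) (n : nat) (P : {set {set 'I_n}}) (v : 'I_n -> R)
  (lam : {set 'I_n} -> R) (vN : {set 'I_n} -> R).
Hypothesis model : NL_model P v lam vN.

Lemma coverT : cover P = setT.
Proof. by case: model => /and3P[/eqP]. Qed.

Lemma pbP i : pblock P i \in P.
Proof. by apply: pblock_mem; rewrite coverT inE. Qed.

Lemma pbi i : i \in pblock P i.
Proof. by rewrite mem_pblock coverT inE. Qed.

Lemma vpos i : 0 < v i.
Proof. by case: model => _ []. Qed.

Lemma sumv_ge0 (A : {set 'I_n}) : 0 <= \sum_(j in A) v j.
Proof. by apply: sumr_ge0 => j _; exact: ltW (vpos j). Qed.

Lemma sumv_gt0 (A : {set 'I_n}) i : i \in A -> 0 < \sum_(j in A) v j.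
Proof.
move=> iA; rewrite (bigD1 i) //=; apply: (lt_le_trans (vpos i)).
by rewrite lerDl; apply: sumr_ge0 => j _; exact: ltW (vpos j).
Qed.

Lemma vNS_ge0 N S : N \in P -> 0 <= vNS v lam vN N S.
Proof.
move=> NP; rewrite /vNS; case: ifP => [/eqP l0|_]; last exact: powR_ge0.
case: model => _ [_ [_ H]]; by apply: mulr_ge0; [exact: ltW (H N NP l0)|].
Qed.

Lemma vNS_gt0 N S i : N \in P -> i \in N :&: S -> 0 < vNS v lam vN N S.
Proof.
move=> NP iNS; rewrite /vNS; case: ifP => [/eqP l0|_].
  have -> : (N :&: S != set0) by apply/set0Pn; exists i.
  case: model => _ [_ [_ H]]; by rewrite mulr1 H.
by apply: powR_gt0; exact: sumv_gt0 iNS.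
Qed.

Lemma denom_gt0 S : 0 < denom P v lam vN S.
Proof.
rewrite /denom; apply: (lt_le_trans ltr01); rewrite lerDl.
by apply: sumr_ge0 => N NP; exact: vNS_ge0.
Qed.

Lemma BF0_gt0 S : 0 < BF0 P v lam vN S.
Proof. by rewrite /BF0 /phi0 !divr_gt0 ?denom_gt0. Qed.


Lemma BF_Mult i (S : {set 'I_n}) : i \in S ->
  BF P v lam vN i S = BF0 P v lam vN S * Mult v lam (pblock P i) S.
Proof.
move=> iS; set N := pblock P i.
have NP : N \in P by exact: pbP.
have iN : i \in N by exact: pbi.
have iNS : i \in N :&: S by rewrite inE iN iS.
have iNT : i \in N :&: setT by rewrite inE iN inE.
have a0 := sumv_gt0 iNS.
have b0 := sumv_gt0 iN.
have c0 := vNS_gt0 NP iNS.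
have d0 := vNS_gt0 NP iNT.
have DS := denom_gt0 S.
have DT := denom_gt0 setT.
have vi := vpos i.
set a := \sum_(j in N :&: S) v j in a0.
set b := \sum_(j in N) v j in b0.
have key : vNS v lam vN N S / vNS v lam vN N setT * (b / a) = Mult v lam N S.
  move: c0 d0; rewrite /vNS /Mult setIT; case: ifP => [/eqP l0|_].
    have -> : (N :&: S != set0) by apply/set0Pn; exists i.
    have -> : (N != set0) by apply/set0Pn; exists i.
    move=> c0 d0.
    rewrite l0 subr0 powRr1 ?divr_ge0 ?ltW // mulfV ?mul1r ?gt_eqF //.
  rewrite -/a -/b => c0 d0.
  have r0 : 0 < b / a by rewrite divr_gt0.
  rewrite powRB; last by apply/implyP => _; rewrite gt_eqF.
  rewrite powRr1 ?ltW //.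
  have ha : b `^ lam N = (b / a) `^ lam N * a `^ lam N.
    by rewrite -powRM ?ltW // divfK ?gt_eqF.
  rewrite ha; field.
  by rewrite !gt_eqF ?powR_gt0.
rewrite /BF /BF0 /phi /phi0 setIT -/N -/a -/b -key.
field.
by rewrite !gt_eqF.
Qed.



Lemma Mult_sub i (S : {set 'I_n}) : pblock P i \subset S -> Mult v lam (pblock P i) S = 1.
Proof.
move=> NS; rewrite /Mult (setIidPl NS) divff ?powR1 //.
by rewrite gt_eqF // (sumv_gt0 (pbi i)).
Qed.

Hypothesis A1 : Assumption1 P lam.

Lemma Mult_gt1 i (S : {set 'I_n}) : i \in S -> ~~ (pblock P i \subset S) ->
  1 < Mult v lam (pblock P i) S.
Proof.
move=> iS nsub; set N := pblock P i.
have NP : N \in P by exact: pbP.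
have iN : i \in N by exact: pbi.
have iNS : i \in N :&: S by rewrite inE iN iS.
have a0 := sumv_gt0 iNS.
have [k kN kS] := subsetPn nsub.
have kND : k \in N :\: S by rewrite inE kN kS.
have e0 := sumv_gt0 kND.
have lam1 : lam N < 1.
  case: model => _ [_ [H _]]; have /andP[_ l1] := H N NP.
  rewrite lt_neqAle l1 andbT; apply/eqP => /(A1 NP) /eqP/cards1P [x Nx].
  move: nsub; rewrite -/N Nx sub1set; move: iN; rewrite Nx inE => /eqP <-.
  by rewrite iS.
rewrite /Mult (big_setID S) /= -/N.
set a := \sum_(j in N :&: S) v j in a0 *.
set e := \sum_(j in N :\: S) v j in e0 *.
have r1 : 1 < (a + e) / a by rewrite ltr_pdivlMr // mul1r ltrDl.
have e1 : 0 < 1 - lam N by rewrite subr_gt0.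
have := gt0_ltr_powR e1 _ _ r1; rewrite powR1; apply.
- by rewrite qualifE /= ler01.
- by rewrite qualifE /= ltW // (lt_trans ltr01).
Qed.

End H.

Theorem proposition4p4 (R : realType) (n b : nat) (n_ge2 : (2 <= n)%N) (b_ge2 : (2 <= b)%N)
  (sigma : 'I_n -> {ffun 'I_(Lb b n) -> 'I_b}) (sigma_inj : injective sigma)
  (P : {set {set 'I_n}}) (v : 'I_n -> R) (lam : {set 'I_n} -> R) (vN : {set 'I_n} -> R)
  (model : NL_model P v lam vN)
  (A1 : Assumption1 P lam)
  (A2 : Assumption2 P v lam sigma)
  (S : {set 'I_n}) (HS : in_Sfam sigma S) :
  let BFi := BF P v lam vN in
  let BFo := BF0 P v lam vN in
  let N := pblock P in
  (* (I) and (II) *)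
  (forall i, i \in S ->
     (N i \subset S -> BFi i S = BFo S) /\
     (~~ (N i \subset S) ->
        BFo S < BFi i S /\
        (forall j, j \in S -> j != i -> (N i = N j <-> BFi i S = BFi j S)))) /\
  (* (a) *)
  (forall i, i \in S -> BFi i S = BFo S -> forall k, k \notin S -> N i != N k) /\
  (* (b) *)
  (forall i j, i \in S -> j \in S -> BFi i S = BFi j S -> BFo S < BFi i S -> N i = N j) /\
  (* (c) *)
  (forall i j, i \in S -> j \in S -> BFi i S != BFi j S -> N i != N j).
Proof.
move=> BFi BFo N.
have BM := BF_Mult model.
have B0 : 0 < BFo S by exact: BF0_gt0 model S.
have pbPi := pbP model.
have pbii := pbi model.
have gt : forall i, i \in S -> ~~ (N i \subset S) -> BFo S < BFi i S.
  move=> i iS ns; rewrite /BFi BM // -{1}(mulr1 (BFo S)) ltr_pM2l //.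
  exact: (Mult_gt1 model A1 iS ns).
have eqI : forall i, i \in S -> N i \subset S -> BFi i S = BFo S.
  by move=> i iS ns; rewrite /BFi BM // (Mult_sub model) ?mulr1.
have sameN : forall i j, i \in S -> j \in S -> N i = N j -> BFi i S = BFi j S.
  by move=> i j iS jS E; rewrite /BFi !BM //; move: E; rewrite /N => ->.
have II : forall i j, i \in S -> j \in S -> ~~ (N i \subset S) ->
    BFi i S = BFi j S -> N i = N j.
  move=> i j iS jS nsi; rewrite /BFi !BM // => /(mulfI (lt0r_neq0 B0)) E.
  case: (boolP (N j \subset S)) => nsj.
    have := Mult_gt1 model A1 iS nsi; rewrite E (Mult_sub model) //.
    by rewrite ltxx.
  apply/eqP; apply: contraT => neq.
  have ne : forall k, k \in S -> N k :&: S != set0.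
    by move=> k kS; apply/set0Pn; exists k; rewrite inE pbii kS.
  have nf : forall k, ~~ (N k \subset S) -> N k :&: S != N k.
    by move=> k nk; apply: contra nk => /eqP <-; exact: subsetIr.
  have := A2 S HS (N i) (N j) (pbPi i) (pbPi j) neq (ne i iS) (nf i nsi) (ne j jS) (nf j nsj).
  by rewrite /N E eqxx.
split.
  move=> i iS; split; first exact: eqI.
  move=> nsi; split; first exact: gt.
  move=> j jS ji; split; first exact: sameN.
  exact: II.
split.
  move=> i iS E k kS; apply/eqP => Eik.
  have nsi : ~~ (N i \subset S).
    by apply/subsetPn; exists k; rewrite // Eik pbii.
  by have := gt i iS nsi; rewrite E ltxx.
split.
  move=> i j iS jS E lt; apply: (II i j iS jS) => //.
  by apply: contraTN lt => sub; rewrite eqI // ltxx.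
move=> i j iS jS; apply: contra => /eqP E; apply/eqP; exact: sameN.
Qed.
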